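(* $(\overline{\mathcal{D}},\overline{\delta},\overline{\varepsilon})$ is a comonad on $\mathsf{CART}$.
   Context: Composition in diagrammatic order. $\mathsf{CART}$ is the category of categories with finite products and functors preserving finite products strictly ($\mathsf{F}(A\times B)=\mathsf{F}A\times\mathsf{F}B$, terminal object preserved, $\mathsf{F}(\pi_j)=\pi_j$). For $\mathbb{X}$ in $\mathsf{CART}$ let $\mathsf{P}(A)=A\times A$, $\mathsf{P}(f)=f\times f$. A pre-$\mathsf{D}$-sequence $f_\bullet:A\to B$ is $(f_0,f_1,\dots)$ with $f_n:\mathsf{P}^n(A)\to B$. Tangent $\mathsf{T}(f_\bullet):\mathsf{P}(A)\to\mathsf{P}(B)$, $\mathsf{T}(f_\bullet)_n=\langle\mathsf{P}^n(\pi_0)f_n,f_{n+1}\rangle$; differential $\mathsf{D}[f_\bullet]:\mathsf{P}(A)\to B$, $\mathsf{D}[f_\bullet]_n=f_{n+1}$. $\overline{\mathcal{D}}[\mathbb{X}]$ has objects those of $\mathbb{X}$, pre-$\mathsf{D}$-sequences as maps, identity $i_\bullet$ with $i_0=1$, $i_n=\pi_1\cdots\pi_1$ ($n$ times), composition $(f_\bullet\ast g_\bullet)_n=\mathsf{T}^n(f_\bullet)_0g_n$, and finite products: terminal object of $\mathbb{X}$, projections $i_\bullet\cdot\pi_j$ with $(i_\bullet\cdot\pi_j)_n=i_n\pi_j$, pairing $\langle f_\bullet,g_\bullet\rangle_n=\langle f_n,g_n\rangle$. For $\mathsf{F}$ in $\mathsf{CART}$, $\overline{\mathcal{D}}[\mathsf{F}]$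 is $\mathsf{F}$ on objects and $\overline{\mathcal{D}}[\mathsf{F}](f_\bullet)_n=\mathsf{F}(f_n)$. $\overline{\varepsilon}:\overline{\mathcal{D}}[\mathbb{X}]\to\mathbb{X}$ is the identity on objects and $f_\bullet\mapsto f_0$. $\overline{\delta}:\overline{\mathcal{D}}[\mathbb{X}]\to\overline{\mathcal{D}}[\overline{\mathcal{D}}[\mathbb{X}]]$ is the identity on objects and sends $f_\bullet$ to the pre-$\mathsf{D}$-sequence (of $\overline{\mathcal{D}}[\mathbb{X}]$) with $0$-th term $f_\bullet$ and $n$-th term $\mathsf{D}^n[f_\bullet]$. *)

(* Defs.v *)
Set Implicit Arguments.
Unset Strict Implicit.

Record CatData := {
  ob : Type;
  hom : ob -> ob -> Type;
  idm : forall A, hom A A;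
  comp : forall A B C, hom A B -> hom B C -> hom A C;   (* comp f g = f ; g *)
  term : ob;
  bang : forall A, hom A term;
  prod : ob -> ob -> ob;
  pi0 : forall A B, hom (prod A B) A;
  pi1 : forall A B, hom (prod A B) B;
  pair : forall C A B, hom C A -> hom C B -> hom C (prod A B)
}.
Arguments hom : clear implicits.
Arguments idm {c} A.
Arguments comp {c A B C} f g.
Arguments term {c}.
Arguments bang {c} A.
Arguments prod {c} A B.
Arguments pi0 {c} A B.
Arguments pi1 {c} A B.
Arguments pair {c C A B} f g.

Definition is_cart (X : CatData) : Prop :=
  (forall A B (f : hom X A B), comp (idm A) f = f) /\
  (forall A B (f : hom X A B), comp f (idm B) = f) /\
  (forall A B C D (f : hom X A B) (g : hom X B C) (h : hom X C D),
      comp (comp f g) h = comp f (comp g h)) /\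
  (forall A (f : hom X A term), f = bang A) /\
  (forall C A B (f : hom X C A) (g : hom X C B), comp (pair f g) (pi0 A B) = f) /\
  (forall C A B (f : hom X C A) (g : hom X C B), comp (pair f g) (pi1 A B) = g) /\
  (forall C A B (h : hom X C (prod A B)), pair (comp h (pi0 A B)) (comp h (pi1 A B)) = h).

(** The object-level strictness equalities F(A x B) = FA x FB and F(1) = 1 are
    recorded as (propositional) fields, so that they can be used for transport. *)
Record FunData (X Y : CatData) := {
  fob : ob X -> ob Y;
  fhom : forall A B, hom X A B -> hom Y (fob A) (fob B);
  fprod : forall A B, fob (prod A B) = prod (fob A) (fob B);
  fterm : fob term = term
}.
Arguments fob {X Y} f _.
Arguments fhom {X Y} f {A B} _.
Arguments fprod {X Y} f A B.
Arguments fterm {X Y} f.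

Definition is_strict (X Y : CatData) (F : FunData X Y) : Prop :=
  (forall A, fhom F (idm A) = idm (fob F A)) /\
  (forall A B C (f : hom X A B) (g : hom X B C), fhom F (comp f g) = comp (fhom F f) (fhom F g)) /\
  (forall A B, eq_rect _ (fun Z => hom Y Z (fob F A)) (fhom F (pi0 A B)) _ (fprod F A B)
               = pi0 (fob F A) (fob F B)) /\
  (forall A B, eq_rect _ (fun Z => hom Y Z (fob F B)) (fhom F (pi1 A B)) _ (fprod F A B)
               = pi1 (fob F A) (fob F B)).

Definition Fid (X : CatData) : FunData X X :=
  {| fob := fun A => A; fhom := fun A B f => f;
     fprod := fun A B => eq_refl; fterm := eq_refl |}.

Definition Fcomp (X Y Z : CatData) (F : FunData X Y) (G : FunData Y Z) : FunData X Z :=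
  {| fob := fun A => fob G (fob F A);
     fhom := fun A B f => fhom G (fhom F f);
     fprod := fun A B => eq_trans (f_equal (fob G) (fprod F A B)) (fprod G (fob F A) (fob F B));
     fterm := eq_trans (f_equal (fob G) (fterm F)) (fterm G) |}.

Definition hcast (Y : CatData) (A A' B B' : ob Y) (eA : A = A') (eB : B = B')
  (f : hom Y A B) : hom Y A' B' :=
  match eA in _ = A1 return hom Y A1 B' with
  | eq_refl => match eB in _ = B1 return hom Y A B1 with eq_refl => f end
  end.

Definition Feq (X Y : CatData) (F G : FunData X Y) : Prop :=
  exists e : forall A, fob F A = fob G A,
    forall A B (f : hom X A B), hcast (e A) (e B) (fhom F f) = fhom G f.

Section Dbar.
Variable X : CatData.

Fixpoint Pn (O : Type) (pr : O -> O -> O) (n : nat) (A : O) : O :=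
  match n with 0 => A | S m => Pn pr m (pr A A) end.
(* so P^{n+1}(A) = P^n(P(A)) definitionally *)

Definition Pmap A B (f : hom X A B) : hom X (prod A A) (prod B B) :=
  pair (comp (pi0 A A) f) (comp (pi1 A A) f).

Fixpoint Pnmap (n : nat) : forall A B, hom X A B -> hom X (Pn prod n A) (Pn prod n B) :=
  match n with
  | 0 => fun A B f => f
  | S m => fun A B f => Pnmap m (Pmap f)
  end.

Definition Dseq (A B : ob X) : Type := forall n, hom X (Pn prod n A) B.

Definition Tang A B (f : Dseq A B) : Dseq (prod A A) (prod B B) :=
  fun n => pair (comp (Pnmap n (pi0 A A)) (f n)) (f (S n)).

Fixpoint Tn (n : nat) : forall A B, Dseq A B -> Dseq (Pn prod n A) (Pn prod n B) :=
  match n with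
  | 0 => fun A B f => f
  | S m => fun A B f => Tn m (Tang f)
  end.

Definition Dcomp A B C (f : Dseq A B) (g : Dseq B C) : Dseq A C :=
  fun n => comp (Tn n f 0) (g n).

Fixpoint Did (n : nat) : forall A, hom X (Pn prod n A) A :=
  match n with
  | 0 => fun A => idm A
  | S m => fun A => comp (Did m (prod A A)) (pi1 A A)
  end.

Definition Dder A B (f : Dseq A B) : Dseq (prod A A) B := fun n => f (S n).

Fixpoint Diter (n : nat) : forall A B, Dseq A B -> Dseq (Pn prod n A) B :=
  match n with
  | 0 => fun A B f => f
  | S m => fun A B f => Diter m (Dder f)
  end.

Definition Dbar : CatData :=
  {| ob := ob X;
     hom := Dseq;
     idm := fun A n => Did n A;
     comp := Dcomp;
     term := term;
     bang := fun A n => bang (Pn prod n A);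
     prod := @prod X;
     pi0 := fun A B n => comp (Did n (prod A B)) (pi0 A B);
     pi1 := fun A B n => comp (Did n (prod A B)) (pi1 A B);
     pair := fun C A B f g n => pair (f n) (g n) |}.

Definition epsbar : FunData Dbar X :=
  {| fob := fun (A : ob Dbar) => (A : ob X);
     fhom := fun (A B : ob Dbar) (f : hom Dbar A B) => (f 0 : hom X A B);
     fprod := fun A B => eq_refl; fterm := eq_refl |}.

End Dbar.

Definition deltabar (X : CatData) : FunData (Dbar X) (Dbar (Dbar X)) :=
  {| fob := fun (A : ob (Dbar X)) => (A : ob (Dbar (Dbar X)));
     fhom := fun (A B : ob (Dbar X)) (f : hom (Dbar X) A B) =>
               ((fun n => Diter n f) : hom (Dbar (Dbar X)) A B);
     fprod := fun A B => eq_refl; fterm := eq_refl |}.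

Fixpoint ePn (X Y : CatData) (F : FunData X Y) (n : nat) :
  forall A, fob F (Pn prod n A) = Pn prod n (fob F A) :=
  match n with
  | 0 => fun A => eq_refl
  | S m => fun A => eq_trans (ePn F m (prod A A)) (f_equal (Pn prod m) (fprod F A A))
  end.

Definition DbarF (X Y : CatData) (F : FunData X Y) : FunData (Dbar X) (Dbar Y) :=
  {| fob := (fob F : ob (Dbar X) -> ob (Dbar Y));
     fhom := fun (A B : ob (Dbar X)) (f : hom (Dbar X) A B) =>
       (fun n => eq_rect _ (fun Z => hom Y Z (fob F B)) (fhom F (f n)) _ (ePn F n A))
         : hom (Dbar Y) (fob F A) (fob F B);
     fprod := fprod F;
     fterm := fterm F |}.

(** * Comonads on CART (objects: CatData satisfying is_cart;
      morphisms: FunData satisfying is_strict; equality of morphisms: Feq). *)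
Definition is_comonad_on_CART
  (Dob : CatData -> CatData)
  (Dmap : forall X Y, FunData X Y -> FunData (Dob X) (Dob Y))
  (eps : forall X, FunData (Dob X) X)
  (delta : forall X, FunData (Dob X) (Dob (Dob X))) : Prop :=
  (forall X, is_cart X -> is_cart (Dob X)) /\
  (forall X Y (F : FunData X Y), is_cart X -> is_cart Y -> is_strict F ->
      is_strict (Dmap X Y F)) /\
  (forall X, is_cart X -> Feq (Dmap X X (Fid X)) (Fid (Dob X))) /\
  (forall X Y Z (F : FunData X Y) (G : FunData Y Z),
      is_cart X -> is_cart Y -> is_cart Z -> is_strict F -> is_strict G ->
      Feq (Dmap X Z (Fcomp F G)) (Fcomp (Dmap X Y F) (Dmap Y Z G))) /\
  (forall X, is_cart X -> is_strict (eps X)) /\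
  (forall X, is_cart X -> is_strict (delta X)) /\
  (forall X Y (F : FunData X Y), is_cart X -> is_cart Y -> is_strict F ->
      Feq (Fcomp (Dmap X Y F) (eps Y)) (Fcomp (eps X) F)) /\
  (forall X Y (F : FunData X Y), is_cart X -> is_cart Y -> is_strict F ->
      Feq (Fcomp (Dmap X Y F) (delta Y))
          (Fcomp (delta X) (Dmap (Dob X) (Dob Y) (Dmap X Y F)))) /\
  (forall X, is_cart X -> Feq (Fcomp (delta X) (eps (Dob X))) (Fid (Dob X))) /\
  (forall X, is_cart X -> Feq (Fcomp (delta X) (Dmap (Dob X) X (eps X))) (Fid (Dob X))) /\
  (forall X, is_cart X ->
      Feq (Fcomp (delta X) (delta (Dob X)))
          (Fcomp (delta X) (Dmap (Dob X) (Dob (Dob X)) (delta X)))).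
Arguments is_comonad_on_CART : clear implicits.

(* Main.v *)
Require Import Defs.
From Stdlib Require Import ProofIrrelevance FunctionalExtensionality.
Set Implicit Arguments.
Unset Strict Implicit.

Lemma c_idl X (HX : is_cart X) A B (f : hom X A B) : comp (idm A) f = f.
Proof. destruct HX as [h _]. apply h. Qed.
Lemma c_idr X (HX : is_cart X) A B (f : hom X A B) : comp f (idm B) = f.
Proof. destruct HX as [_ [h _]]. apply h. Qed.
Lemma c_assoc X (HX : is_cart X) A B C D (f : hom X A B) (g : hom X B C) (h : hom X C D) :
  comp (comp f g) h = comp f (comp g h).
Proof. destruct HX as [_ [_ [h' _]]]. apply h'. Qed.
Lemma c_term X (HX : is_cart X) A (f : hom X A term) : f = bang A.
Proof. destruct HX as [_ [_ [_ [h _]]]]. apply h. Qed.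
Lemma c_p0 X (HX : is_cart X) C A B (f : hom X C A) (g : hom X C B) : comp (pair f g) (pi0 A B) = f.
Proof. destruct HX as [_ [_ [_ [_ [h _]]]]]. apply h. Qed.
Lemma c_p1 X (HX : is_cart X) C A B (f : hom X C A) (g : hom X C B) : comp (pair f g) (pi1 A B) = g.
Proof. destruct HX as [_ [_ [_ [_ [_ [h _]]]]]]. apply h. Qed.
Lemma c_eta X (HX : is_cart X) C A B (h : hom X C (prod A B)) : pair (comp h (pi0 A B)) (comp h (pi1 A B)) = h.
Proof. destruct HX as [_ [_ [_ [_ [_ [_ h']]]]]]. apply h'. Qed.

Lemma comp_pair X (HX : is_cart X) D C A B (h : hom X D C) (f : hom X C A) (g : hom X C B) :
  comp h (pair f g) = pair (comp h f) (comp h g).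
Proof.
  rewrite <- (c_eta HX (comp h (pair f g))), !(c_assoc HX), (c_p0 HX), (c_p1 HX). reflexivity.
Qed.
Lemma pair_id X (HX : is_cart X) (A B : ob X) : pair (pi0 A B) (pi1 A B) = idm (prod A B).
Proof. rewrite <- (c_eta HX (idm _)), !(c_idl HX). reflexivity. Qed.
Lemma Pmap_p0 X (HX : is_cart X) A B (f : hom X A B) : comp (Pmap f) (pi0 B B) = comp (pi0 A A) f.
Proof. apply c_p0; auto. Qed.
Lemma Pmap_p1 X (HX : is_cart X) A B (f : hom X A B) : comp (Pmap f) (pi1 B B) = comp (pi1 A A) f.
Proof. apply c_p1; auto. Qed.
Lemma Pmap_comp X (HX : is_cart X) A B C (f : hom X A B) (g : hom X B C) :
  Pmap (comp f g) = comp (Pmap f) (Pmap g).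
Proof.
  unfold Pmap at 3. rewrite (comp_pair HX), <- !(c_assoc HX), (Pmap_p0 HX), (Pmap_p1 HX).
  unfold Pmap; rewrite !(c_assoc HX); reflexivity.
Qed.
Lemma Pmap_id X (HX : is_cart X) (A : ob X) : Pmap (idm A) = idm (prod A A).
Proof. unfold Pmap; rewrite !(c_idr HX); apply pair_id; auto. Qed.
Lemma Pnmap_comp X (HX : is_cart X) n : forall A B C (f : hom X A B) (g : hom X B C),
  Pnmap n (comp f g) = comp (Pnmap n f) (Pnmap n g).
Proof. induction n; simpl; intros; [reflexivity|]. rewrite (Pmap_comp HX); apply IHn. Qed.
Lemma Pnmap_id X (HX : is_cart X) n : forall A : ob X, Pnmap n (idm A) = idm (Pn prod n A).
Proof. induction n; simpl; intros; [reflexivity|]. rewrite (Pmap_id HX); apply IHn. Qed.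
Lemma Did_nat X (HX : is_cart X) n : forall A B (f : hom X A B),
  comp (Pnmap n f) (Did n B) = comp (Did n A) f.
Proof.
  induction n; simpl; intros.
  - rewrite (c_idl HX), (c_idr HX); reflexivity.
  - rewrite <- (c_assoc HX), IHn, !(c_assoc HX), (Pmap_p1 HX). reflexivity.
Qed.

Lemma Dseq_ext X A B (f g : @Dseq X A B) : (forall n, f n = g n) -> f = g.
Proof. intro H. apply functional_extensionality_dep. exact H. Qed.

Lemma Tn_ext X n A B (f g : @Dseq X A B) : f = g -> Tn n f = Tn n g.
Proof. intros ->; reflexivity. Qed.

Lemma Tang_id X (HX : is_cart X) (A : ob X) : Tang (fun n => Did n A) = (fun n => Did n (prod A A)).
Proof.
  apply Dseq_ext; intro n; unfold Tang. simpl.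
  rewrite (Did_nat HX). exact (c_eta HX _).
Qed.

Lemma Tn_id X (HX : is_cart X) n : forall A : ob X, Tn n (fun k => Did k A) = (fun k => Did k (Pn prod n A)).
Proof. induction n; simpl; intros; [reflexivity|]. rewrite (Tang_id HX). apply IHn. Qed.

Lemma Tn_did X (HX : is_cart X) n : forall A B (f : @Dseq X A B),
  comp (Tn n f 0) (Did n B) = f n.
Proof.
  induction n; simpl; intros.
  - apply c_idr; auto.
  - rewrite <- (c_assoc HX). transitivity (comp (Tang f n) (pi1 B B)).
    + f_equal. apply IHn.
    + unfold Tang. apply c_p1; auto.
Qed.

Lemma comp_Pmap X (HX : is_cart X) C A B (h : hom X C (prod A A)) (v : hom X A B) :
  comp h (Pmap v) = pair (comp (comp h (pi0 A A)) v) (comp (comp h (pi1 A A)) v).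
Proof. unfold Pmap. rewrite (comp_pair HX), !(c_assoc HX). reflexivity. Qed.

Lemma Tang_R X (HX : is_cart X) A B A' B' (u : hom X A A') (v : hom X B B')
  (f : Dseq A B) (f' : Dseq A' B') :
  (forall n, comp (Pnmap n u) (f' n) = comp (f n) v) ->
  forall n, comp (Pnmap n (Pmap u)) (Tang f' n) = comp (Tang f n) (Pmap v).
Proof.
  intros H n. unfold Tang. rewrite (comp_pair HX), (comp_Pmap HX), (c_p0 HX), (c_p1 HX).
  f_equal.
  - rewrite <- (c_assoc HX), <- (Pnmap_comp HX), (Pmap_p0 HX), (Pnmap_comp HX), !(c_assoc HX).
    rewrite H. reflexivity.
  - exact (H (S n)).
Qed.

Lemma Tn_R X (HX : is_cart X) m : forall A B A' B' (u : hom X A A') (v : hom X B B')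
  (f : Dseq A B) (f' : Dseq A' B'),
  (forall n, comp (Pnmap n u) (f' n) = comp (f n) v) ->
  comp (Pnmap m u) (Tn m f' 0) = comp (Tn m f 0) (Pnmap m v).
Proof.
  induction m; simpl; intros.
  - apply (H 0).
  - apply IHm. apply Tang_R; auto.
Qed.

Lemma Tn_Tang_p0 X (HX : is_cart X) k A B (f : @Dseq X A B) :
  comp (Pnmap k (pi0 A A)) (Tn k f 0) = comp (Tn k (Tang f) 0) (Pnmap k (pi0 B B)).
Proof.
  apply Tn_R; auto. intro n. unfold Tang. rewrite (c_p0 HX). reflexivity.
Qed.

Lemma Tang_Dcomp X (HX : is_cart X) A B C (f : @Dseq X A B) (g : Dseq B C) :
  Tang (Dcomp f g) = Dcomp (Tang f) (Tang g).
Proof.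
  apply Dseq_ext; intro k. unfold Dcomp, Tang at 1 3. simpl.
  rewrite (comp_pair HX). f_equal. rewrite <- !(c_assoc HX). f_equal. apply Tn_Tang_p0; auto.
Qed.

Lemma Tn_Dcomp X (HX : is_cart X) n : forall A B C (f : @Dseq X A B) (g : Dseq B C),
  Tn n (Dcomp f g) = Dcomp (Tn n f) (Tn n g).
Proof.
  induction n; simpl; intros; [reflexivity|]. rewrite (Tang_Dcomp HX). apply IHn.
Qed.

Lemma Dbar_cart X (HX : is_cart X) : is_cart (Dbar X).
Proof.
  repeat split; simpl; intros.
  - apply Dseq_ext; intro n. unfold Dcomp. rewrite (Tn_id HX). apply c_idl; auto.
  - apply Dseq_ext; intro n. unfold Dcomp. apply Tn_did; auto.
  - apply Dseq_ext; intro n.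
    change (comp (Tn n (Dcomp f g) 0) (h n) = comp (Tn n f 0) (comp (Tn n g 0) (h n))).
    rewrite (Tn_Dcomp HX). unfold Dcomp; simpl.
    apply c_assoc; auto.
  - apply Dseq_ext; intro n. apply c_term; auto.
  - apply Dseq_ext; intro n. unfold Dcomp. rewrite <- (c_assoc HX), (Tn_did HX). apply c_p0; auto.
  - apply Dseq_ext; intro n. unfold Dcomp. rewrite <- (c_assoc HX), (Tn_did HX). apply c_p1; auto.
  - apply Dseq_ext; intro n. unfold Dcomp. rewrite <- !(c_assoc HX), !(Tn_did HX). apply c_eta; auto.
Qed.

Definition iota (C : CatData) (x y : ob C) (e : x = y) : hom C x y :=
  eq_rect x (hom C x) (idm x) y e.
Arguments iota {C x y} e.
Arguments iota : simpl never.

Lemma iota_pi C (x y : ob C) (p q : x = y) : iota p = iota q.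
Proof. rewrite (proof_irrelevance _ p q). reflexivity. Qed.
Lemma iota_refl C (x : ob C) (p : x = x) : iota p = idm x.
Proof. rewrite (proof_irrelevance _ p eq_refl). reflexivity. Qed.
Lemma iota_trans C (HC : is_cart C) (x y z : ob C) (p : x = y) (q : y = z) :
  iota (eq_trans p q) = comp (iota p) (iota q).
Proof. destruct q. destruct p. unfold iota; simpl. rewrite (c_idr HC). reflexivity. Qed.
Lemma iota_inv C (HC : is_cart C) (x y : ob C) (p : x = y) :
  comp (iota p) (iota (eq_sym p)) = idm x.
Proof. destruct p. unfold iota; simpl. apply (c_idr HC). Qed.
Lemma iota_inv' C (HC : is_cart C) (x y : ob C) (p : x = y) :
  comp (iota (eq_sym p)) (iota p) = idm y.
Proof. destruct p. unfold iota; simpl. apply (c_idr HC). Qed.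
Lemma eq_rect_dom C (HC : is_cart C) (D x y : ob C) (e : x = y) (h : hom C x D) :
  eq_rect x (fun Z => hom C Z D) h y e = comp (iota (eq_sym e)) h.
Proof. destruct e. unfold iota; simpl. rewrite (c_idl HC). reflexivity. Qed.
Lemma Pnmap_iota C (HC : is_cart C) n (x y : ob C) (p : x = y) :
  Pnmap n (iota p) = iota (f_equal (Pn prod n) p).
Proof. destruct p. unfold iota; simpl. apply (Pnmap_id HC). Qed.

Lemma F_id X Y (F : FunData X Y) (HF : is_strict F) A : fhom F (idm A) = idm (fob F A).
Proof. destruct HF as [h _]. apply h. Qed.
Lemma F_comp X Y (F : FunData X Y) (HF : is_strict F) A B C (f : hom X A B) (g : hom X B C) :
  fhom F (comp f g) = comp (fhom F f) (fhom F g).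
Proof. destruct HF as [_ [h _]]. apply h. Qed.
Lemma F_iota X Y (F : FunData X Y) (HF : is_strict F) (x y : ob X) (p : x = y) :
  fhom F (iota p) = iota (f_equal (fob F) p).
Proof. destruct p. unfold iota; simpl. apply (F_id HF). Qed.

Definition phi X Y (F : FunData X Y) (A B : ob X) := iota (fprod F A B).
Definition phiinv X Y (F : FunData X Y) (A B : ob X) := iota (eq_sym (fprod F A B)).

Lemma F_p0 X Y (HY : is_cart Y) (F : FunData X Y) (HF : is_strict F) A B :
  fhom F (pi0 A B) = comp (phi F A B) (pi0 _ _).
Proof.
  destruct HF as [_ [_ [h _]]]. specialize (h A B). rewrite (eq_rect_dom HY) in h.
  rewrite <- h. unfold phi. rewrite <- (c_assoc HY), (iota_inv HY), (c_idl HY). reflexivity.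
Qed.
Lemma F_p1 X Y (HY : is_cart Y) (F : FunData X Y) (HF : is_strict F) A B :
  fhom F (pi1 A B) = comp (phi F A B) (pi1 _ _).
Proof.
  destruct HF as [_ [_ [_ h]]]. specialize (h A B). rewrite (eq_rect_dom HY) in h.
  rewrite <- h. unfold phi. rewrite <- (c_assoc HY), (iota_inv HY), (c_idl HY). reflexivity.
Qed.
Lemma F_pair X Y (HX : is_cart X) (HY : is_cart Y) (F : FunData X Y) (HF : is_strict F) C A B
  (f : hom X C A) (g : hom X C B) :
  comp (fhom F (pair f g)) (phi F A B) = pair (fhom F f) (fhom F g).
Proof.
  rewrite <- (c_eta HY (comp (fhom F (pair f g)) (phi F A B))), !(c_assoc HY).
  rewrite <- (F_p0 HY HF), <- (F_p1 HY HF), <- !(F_comp HF), (c_p0 HX), (c_p1 HX).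
  reflexivity.
Qed.

Lemma F_Pmap X Y (HX : is_cart X) (HY : is_cart Y) (F : FunData X Y) (HF : is_strict F)
  A B (f : hom X A B) :
  comp (fhom F (Pmap f)) (phi F B B) = comp (phi F A A) (Pmap (fhom F f)).
Proof.
  unfold Pmap at 1. rewrite (F_pair HX HY HF), !(F_comp HF), (F_p0 HY HF), (F_p1 HY HF).
  rewrite (comp_Pmap HY), !(c_assoc HY). reflexivity.
Qed.

Definition psi X Y (F : FunData X Y) n (A : ob X) := iota (ePn F n A).
Definition psiinv X Y (F : FunData X Y) n (A : ob X) := iota (eq_sym (ePn F n A)).

Lemma psi0 X Y (F : FunData X Y) A : psi F 0 A = idm (fob F A).
Proof. reflexivity. Qed.
Lemma psiinv0 X Y (F : FunData X Y) A : psiinv F 0 A = idm (fob F A).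
Proof. reflexivity. Qed.
Lemma psi_S X Y (HY : is_cart Y) (F : FunData X Y) m A :
  psi F (S m) A = comp (psi F m (prod A A)) (Pnmap m (phi F A A)).
Proof. unfold psi, phi. rewrite (Pnmap_iota HY), <- (iota_trans HY). apply iota_pi. Qed.
Lemma psiinv_S X Y (HY : is_cart Y) (F : FunData X Y) m A :
  psiinv F (S m) A = comp (Pnmap m (phiinv F A A)) (psiinv F m (prod A A)).
Proof. unfold psiinv, phiinv. rewrite (Pnmap_iota HY), <- (iota_trans HY). apply iota_pi. Qed.
Lemma psi_inv X Y (HY : is_cart Y) (F : FunData X Y) n A :
  comp (psi F n A) (psiinv F n A) = idm _.
Proof. apply iota_inv; auto. Qed.
Lemma psi_inv' X Y (HY : is_cart Y) (F : FunData X Y) n A :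
  comp (psiinv F n A) (psi F n A) = idm _.
Proof. apply iota_inv'; auto. Qed.
Lemma phi_inv X Y (HY : is_cart Y) (F : FunData X Y) A B :
  comp (phi F A B) (phiinv F A B) = idm _.
Proof. apply iota_inv; auto. Qed.
Lemma phi_inv' X Y (HY : is_cart Y) (F : FunData X Y) A B :
  comp (phiinv F A B) (phi F A B) = idm _.
Proof. apply iota_inv'; auto. Qed.

Lemma F_Pnmap X Y (HX : is_cart X) (HY : is_cart Y) (F : FunData X Y) (HF : is_strict F) n :
  forall A B (f : hom X A B),
  comp (fhom F (Pnmap n f)) (psi F n B) = comp (psi F n A) (Pnmap n (fhom F f)).
Proof.
  induction n; intros.
  - rewrite !psi0. simpl. rewrite (c_idl HY), (c_idr HY). reflexivity.
  - rewrite !(psi_S HY). cbn [Pnmap Pn].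
    rewrite <- (c_assoc HY), IHn, !(c_assoc HY), <- !(Pnmap_comp HY), (F_Pmap HX HY HF).
    reflexivity.
Qed.

Lemma F_Pnmap_inv X Y (HX : is_cart X) (HY : is_cart Y) (F : FunData X Y) (HF : is_strict F) n
  A B (f : hom X A B) :
  comp (psiinv F n A) (fhom F (Pnmap n f)) = comp (Pnmap n (fhom F f)) (psiinv F n B).
Proof.
  transitivity (comp (psiinv F n A) (comp (comp (fhom F (Pnmap n f)) (psi F n B)) (psiinv F n B))).
  - rewrite (c_assoc HY), (psi_inv HY), (c_idr HY). reflexivity.
  - rewrite (F_Pnmap HX HY HF), <- !(c_assoc HY), (psi_inv' HY), (c_idl HY). reflexivity.
Qed.

Lemma F_Did X Y (HX : is_cart X) (HY : is_cart Y) (F : FunData X Y) (HF : is_strict F) n :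
  forall A, fhom F (Did n A) = comp (psi F n A) (Did n (fob F A)).
Proof.
  induction n; intros.
  - rewrite psi0. simpl. rewrite (F_id HF), (c_idl HY). reflexivity.
  - cbn [Did]. rewrite (F_comp HF), IHn, (F_p1 HY HF), (psi_S HY).
    rewrite !(c_assoc HY). f_equal. rewrite <- !(c_assoc HY). f_equal.
    symmetry. apply (Did_nat HY).
Qed.

Definition sconj X (A B A' B' : ob X) (a : hom X A' A) (b : hom X B B') (g : Dseq A B) : Dseq A' B' :=
  fun n => comp (Pnmap n a) (comp (g n) b).

Lemma Tang_conj X (HX : is_cart X) (A B A' B' : ob X) (a : hom X A' A) (b : hom X B B') (g : Dseq A B) :
  Tang (sconj a b g) = sconj (Pmap a) (Pmap b) (Tang g).
Proof.
  apply Dseq_ext; intro n. unfold Tang, sconj.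
  rewrite (comp_Pmap HX), (c_p0 HX), (c_p1 HX), (comp_pair HX).
  f_equal.
  rewrite <- !(c_assoc HX), <- (Pnmap_comp HX), <- (Pnmap_comp HX), (Pmap_p0 HX). reflexivity.
Qed.

Lemma Tn_conj X (HX : is_cart X) m : forall (A B A' B' : ob X) (a : hom X A' A) (b : hom X B B') (g : Dseq A B),
  Tn m (sconj a b g) = sconj (Pnmap m a) (Pnmap m b) (Tn m g).
Proof.
  induction m; intros; [reflexivity|]. cbn [Tn]. rewrite (Tang_conj HX). apply IHm.
Qed.

Lemma conj_conj X (HX : is_cart X) (A B A' B' A'' B'' : ob X) (a : hom X A' A) (b : hom X B B')
  (a' : hom X A'' A') (b' : hom X B' B'') (g : Dseq A B) :
  sconj a' b' (sconj a b g) = sconj (comp a' a) (comp b b') g.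
Proof.
  apply Dseq_ext; intro n. unfold sconj. rewrite (Pnmap_comp HX), !(c_assoc HX). reflexivity.
Qed.

Lemma conj_id X (HX : is_cart X) (A B : ob X) (g : Dseq A B) : sconj (idm A) (idm B) g = g.
Proof.
  apply Dseq_ext; intro n. unfold sconj. rewrite (Pnmap_id HX), (c_idl HX), (c_idr HX). reflexivity.
Qed.

Lemma DbarF_n X Y (HY : is_cart Y) (F : FunData X Y) (A B : ob X) (f : @Dseq X A B) n :
  (fhom (DbarF F) f : @Dseq Y (fob F A) (fob F B)) n = comp (psiinv F n A) (fhom F (f n)).
Proof. simpl. apply (eq_rect_dom HY). Qed.

Lemma Tang_F X Y (HX : is_cart X) (HY : is_cart Y) (F : FunData X Y) (HF : is_strict F)
  (A B : ob X) (f : @Dseq X A B) :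
  Tang (fhom (DbarF F) f : @Dseq Y (fob F A) (fob F B)) = sconj (phiinv F A A) (phi F B B) (fhom (DbarF F) (Tang f)).
Proof.
  apply Dseq_ext; intro n. unfold sconj. rewrite (DbarF_n HY). unfold Tang at 2.
  rewrite (c_assoc HY), (F_pair HX HY HF).
  unfold Tang. rewrite !(DbarF_n HY), !(comp_pair HY). f_equal.
  - rewrite (F_comp HF), <- !(c_assoc HY). f_equal.
    rewrite (c_assoc HY), (F_Pnmap_inv HX HY HF), <- (c_assoc HY), <- (Pnmap_comp HY).
    rewrite (F_p0 HY HF), <- (c_assoc HY), (phi_inv' HY), (c_idl HY). reflexivity.
  - rewrite (psiinv_S HY). apply c_assoc; auto.
Qed.

Lemma Tn_F X Y (HX : is_cart X) (HY : is_cart Y) (F : FunData X Y) (HF : is_strict F) n :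
  forall (A B : ob X) (f : @Dseq X A B),
  Tn n (fhom (DbarF F) f : @Dseq Y (fob F A) (fob F B)) = sconj (psiinv F n A) (psi F n B) (fhom (DbarF F) (Tn n f)).
Proof.
  induction n; intros.
  - rewrite psiinv0, psi0. symmetry. apply conj_id; auto.
  - cbn [Tn]. rewrite (Tang_F HX HY HF), (Tn_conj HY), IHn, (conj_conj HY).
    rewrite (psiinv_S HY), (psi_S HY). reflexivity.
Qed.

Lemma eq_rect_Dseq Y (C x y : ob (Dbar Y)) (e : x = y) (s : hom (Dbar Y) x C) :
  eq_rect x (fun Z : ob (Dbar Y) => hom (Dbar Y) Z C) s y e
  = (fun n => eq_rect _ (fun Z => hom Y Z C) (s n) _ (f_equal (Pn (@prod Y) n) e)).
Proof. destruct e. reflexivity. Qed.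

Lemma cancel X (HX : is_cart X) (A B C : ob X) (a : hom X A B) (b : hom X B A)
  (e : comp a b = idm A) (h : hom X A C) : comp a (comp b h) = h.
Proof. rewrite <- (c_assoc HX), e. apply c_idl; auto. Qed.

Lemma DbarF_strict X Y (HX : is_cart X) (HY : is_cart Y) (F : FunData X Y) (HF : is_strict F) :
  is_strict (DbarF F).
Proof.
  split; [|split; [|split]]; intros.
  - apply Dseq_ext; intro n. rewrite (DbarF_n HY). simpl.
    rewrite (F_Did HX HY HF), <- (c_assoc HY), (psi_inv' HY), (c_idl HY). reflexivity.
  - apply Dseq_ext; intro n. rewrite (DbarF_n HY).
    change (comp (psiinv F n A) (fhom F (comp (Tn n f 0) (g n))) =
            comp (Tn n (fhom (DbarF F) f : @Dseq Y (fob F A) (fob F B)) 0) ((fhom (DbarF F) g : @Dseq Y (fob F B) (fob F C)) n)).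
    rewrite (Tn_F HX HY HF), (DbarF_n HY). unfold sconj. rewrite (DbarF_n HY).
    rewrite psiinv0. cbn [Pnmap]. rewrite (c_idl HY), (F_comp HF), !(c_assoc HY).
    f_equal. f_equal. rewrite <- (c_assoc HY), (psi_inv HY), (c_idl HY). reflexivity.
  - rewrite eq_rect_Dseq. apply Dseq_ext; intro n. rewrite (eq_rect_dom HY), (DbarF_n HY).
    simpl. rewrite (F_comp HF), (F_Did HX HY HF), (F_p0 HY HF).
    rewrite !(c_assoc HY), (cancel HY (psi_inv' HY F n (prod A B))).
    rewrite <- (c_assoc HY (Did n _)), <- (Did_nat HY), (c_assoc HY).
    unfold phi. rewrite (Pnmap_iota HY), (cancel HY (iota_inv' HY _)). reflexivity.
  - rewrite eq_rect_Dseq. apply Dseq_ext; intro n. rewrite (eq_rect_dom HY), (DbarF_n HY).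
    simpl. rewrite (F_comp HF), (F_Did HX HY HF), (F_p1 HY HF).
    rewrite !(c_assoc HY), (cancel HY (psi_inv' HY F n (prod A B))).
    rewrite <- (c_assoc HY (Did n _)), <- (Did_nat HY), (c_assoc HY).
    unfold phi. rewrite (Pnmap_iota HY), (cancel HY (iota_inv' HY _)). reflexivity.
Qed.

Definition lin X (A B : ob X) (h : hom X A B) : Dseq A B := fun n => comp (Did n A) h.

Lemma Dder_lin X (HX : is_cart X) (A B : ob X) (h : hom X A B) :
  Dder (lin h) = lin (comp (pi1 A A) h).
Proof. apply Dseq_ext; intro n. unfold Dder, lin. simpl. apply c_assoc; auto. Qed.

Lemma Diter_lin X (HX : is_cart X) n : forall (A B : ob X) (h : hom X A B),
  Diter n (lin h) = lin (comp (Did n A) h).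
Proof.
  induction n; intros.
  - simpl. rewrite (c_idl HX). reflexivity.
  - cbn [Diter]. rewrite (Dder_lin HX), IHn. cbn [Did]. rewrite (c_assoc HX). reflexivity.
Qed.

Lemma lin_comp X (HX : is_cart X) (A B C : ob X) (a : hom X A B) (b : hom X B C) :
  Dcomp (lin a) (lin b) = lin (comp a b).
Proof.
  apply Dseq_ext; intro n. unfold Dcomp. unfold lin at 2.
  rewrite <- (c_assoc HX), (Tn_did HX). unfold lin. apply c_assoc; auto.
Qed.

Lemma Tang_lin X (HX : is_cart X) (A B : ob X) (h : hom X A B) :
  Tang (lin h) = lin (Pmap h).
Proof.
  apply Dseq_ext; intro n. unfold Tang, lin. rewrite (comp_Pmap HX). f_equal.
  rewrite <- (c_assoc HX), (Did_nat HX). reflexivity.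
Qed.

Lemma Tn_lin X (HX : is_cart X) n : forall (A B : ob X) (h : hom X A B),
  Tn n (lin h) = lin (Pnmap n h).
Proof.
  induction n; intros; [reflexivity|]. cbn [Tn]. rewrite (Tang_lin HX). apply IHn.
Qed.

Lemma Did_D X (HX : is_cart X) n : forall A : ob X,
  Did (X := Dbar X) n A = lin (Did n A).
Proof.
  induction n; intros.
  - apply Dseq_ext; intro k. unfold lin. simpl. rewrite (c_idr HX). reflexivity.
  - cbn [Did]. rewrite IHn. change (Dcomp (lin (Did n (prod A A))) (lin (pi1 A A)) = lin (Did (S n) A)).
    rewrite (lin_comp HX). reflexivity.
Qed.

Lemma Pmap_D_lin X (HX : is_cart X) (A B : ob X) (h : hom X A B) :
  Pmap (X := Dbar X) (lin h) = lin (Pmap h).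
Proof.
  unfold Pmap at 1.
  change ((fun n => pair (Dcomp (lin (pi0 A A)) (lin h) n) (Dcomp (lin (pi1 A A)) (lin h) n))
    = lin (Pmap h)).
  rewrite !(lin_comp HX). apply Dseq_ext; intro n. unfold lin, Pmap. rewrite (comp_pair HX). reflexivity.
Qed.

Lemma Pnmap_D_lin X (HX : is_cart X) n : forall (A B : ob X) (h : hom X A B),
  Pnmap (X := Dbar X) n (lin h) = lin (Pnmap n h).
Proof.
  induction n; intros; [reflexivity|]. cbn [Pnmap]. rewrite (Pmap_D_lin HX). apply IHn.
Qed.

Lemma Diter_pair X n : forall (C A B : ob X) (f : Dseq C A) (g : Dseq C B),
  Diter n (fun k => pair (f k) (g k)) = (fun k => pair (Diter n f k) (Diter n g k)).
Proof. induction n; intros; [reflexivity|]. cbn [Diter]. apply IHn. Qed.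

Lemma Diter_Dcomp X n : forall (A B C : ob X) (f : Dseq A B) (g : Dseq B C),
  Diter n (Dcomp f g) = Dcomp (Tn n f) (Diter n g).
Proof.
  induction n; intros; [reflexivity|]. cbn [Diter Tn].
  change (Dder (Dcomp f g)) with (Dcomp (Tang f) (Dder g)). apply IHn.
Qed.

Lemma Tang_split X (HX : is_cart X) (A B : ob X) (f : Dseq A B) :
  Tang f = (fun k => pair (Dcomp (lin (pi0 A A)) f k) (Dder f k)).
Proof.
  apply Dseq_ext; intro k. unfold Tang, Dcomp, Dder. rewrite (Tn_lin HX). unfold lin.
  simpl. rewrite (c_idl HX). reflexivity.
Qed.

Lemma Tang_D_delta X (HX : is_cart X) (A B : ob X) (f : Dseq A B) :
  Tang (X := Dbar X) (fun n => Diter n f) = (fun n => Diter n (Tang f)).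
Proof.
  apply functional_extensionality_dep; intro k.
  rewrite (Tang_split HX f), Diter_pair, Diter_Dcomp, (Tn_lin HX).
  unfold Tang. change (@pi0 (Dbar X) A A) with (lin (pi0 A A)).
  rewrite (Pnmap_D_lin HX). reflexivity.
Qed.

Lemma Tn_D_delta X (HX : is_cart X) n : forall (A B : ob X) (f : Dseq A B),
  Tn (X := Dbar X) n (fun k => Diter k f) = (fun k => Diter k (Tn n f)).
Proof.
  induction n; intros; [reflexivity|]. cbn [Tn]. rewrite (Tang_D_delta HX). apply IHn.
Qed.

Lemma Diter_conj X m : forall (A B A' B' : ob X) (a : hom X A' A) (b : hom X B B') (g : Dseq A B),
  Diter m (sconj a b g) = sconj (Pnmap m a) b (Diter m g).
Proof.
  induction m; intros; [reflexivity|]. cbn [Diter].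
  change (Dder (sconj a b g)) with (sconj (Pmap a) b (Dder g)). apply IHm.
Qed.

Lemma Dder_F X Y (HY : is_cart Y) (F : FunData X Y) (A B : ob X) (f : @Dseq X A B) :
  Dder (fhom (DbarF F) f : @Dseq Y (fob F A) (fob F B))
  = sconj (phiinv F A A) (idm _) (fhom (DbarF F) (Dder f) : @Dseq Y (fob F (prod A A)) (fob F B)).
Proof.
  apply Dseq_ext; intro j. unfold Dder at 1, sconj. rewrite !(DbarF_n HY), (psiinv_S HY).
  rewrite (c_idr HY), (c_assoc HY). reflexivity.
Qed.

Lemma Diter_F X Y (HX : is_cart X) (HY : is_cart Y) (F : FunData X Y) (HF : is_strict F) n :
  forall (A B : ob X) (f : @Dseq X A B) k,
  Diter n (fhom (DbarF F) f : @Dseq Y (fob F A) (fob F B)) k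
  = comp (Pnmap k (psiinv F n A)) (comp (psiinv F k (Pn prod n A)) (fhom F (Diter n f k))).
Proof.
  induction n; intros.
  - cbn [Diter]. rewrite psiinv0, (Pnmap_id HY), (c_idl HY), (DbarF_n HY). reflexivity.
  - cbn [Diter]. rewrite (Dder_F HY), Diter_conj. unfold sconj. rewrite IHn.
    rewrite (c_idr HY), (psiinv_S HY), (Pnmap_comp HY), (c_assoc HY). reflexivity.
Qed.

Lemma Diter_0 X n : forall (A B : ob X) (f : Dseq A B), Diter n f 0 = f n.
Proof. induction n; intros; [reflexivity|]. cbn [Diter]. rewrite IHn. reflexivity. Qed.

Lemma Diter_D_delta X n : forall (A B : ob X) (f : Dseq A B),
  Diter (X := Dbar X) n (fun k => Diter k f) = (fun k => Diter k (Diter n f)).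
Proof.
  induction n; intros; [reflexivity|]. cbn [Diter].
  change (Dder (X := Dbar X) (fun k => Diter k f)) with (fun k => Diter k (Dder f)).
  apply IHn.
Qed.

Theorem proposition3p19 :
  is_comonad_on_CART Dbar DbarF epsbar deltabar.
Proof.
  unfold is_comonad_on_CART.
  split; [|split; [|split; [|split; [|split; [|split; [|split; [|split; [|split; [|split]]]]]]]]].
  - intros X HX. apply Dbar_cart; auto.
  - intros X Y F HX HY HF. apply DbarF_strict; auto.
  - intros X HX. exists (fun A => eq_refl). intros A B f. simpl.
    apply Dseq_ext; intro n. rewrite (proof_irrelevance _ (ePn (Fid X) n A) eq_refl). reflexivity.
  - intros X Y Z F G HX HY HZ HF HG. exists (fun A => eq_refl). intros A B f. simpl.
    apply Dseq_ext; intro n. rewrite !(eq_rect_dom HZ), (eq_rect_dom HY), (F_comp HG), (F_iota HG).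
    rewrite <- (c_assoc HZ), <- (iota_trans HZ). f_equal. apply iota_pi.
  - intros X HX. split; [|split; [|split]]; intros; try reflexivity.
    all: simpl; apply c_idl; auto.
  - intros X HX. split; [|split; [|split]]; intros.
    + simpl. apply functional_extensionality_dep; intro n.
      assert (E : (fun k => @Did X k A) = @lin X A A (@idm X A)).
      { apply Dseq_ext; intro k. unfold lin. rewrite (c_idr HX). reflexivity. }
      rewrite E, (Diter_lin HX), (c_idr HX), (Did_D HX). reflexivity.
    + simpl. apply functional_extensionality_dep; intro n.
      rewrite Diter_Dcomp. unfold Dcomp at 2. rewrite (Tn_D_delta HX). reflexivity.
    + simpl. apply functional_extensionality_dep; intro n.
      change (Diter n (@lin X _ _ (@pi0 X A B)) = Dcomp (Did (X := Dbar X) n (prod A B)) (@lin X _ _ (@pi0 X A B))).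
      rewrite (Did_D HX), (lin_comp HX), (Diter_lin HX). reflexivity.
    + simpl. apply functional_extensionality_dep; intro n.
      change (Diter n (@lin X _ _ (@pi1 X A B)) = Dcomp (Did (X := Dbar X) n (prod A B)) (@lin X _ _ (@pi1 X A B))).
      rewrite (Did_D HX), (lin_comp HX), (Diter_lin HX). reflexivity.
  - intros X Y F HX HY HF. exists (fun A => eq_refl). intros A B f. reflexivity.
  - intros X Y F HX HY HF. exists (fun A => eq_refl). intros A B f.
    apply functional_extensionality_dep; intro n.
    change (Diter n (fhom (DbarF F) f : @Dseq Y (fob F A) (fob F B)) =
      eq_rect _ (fun Z : ob (Dbar Y) => hom (Dbar Y) Z (fob F B))
        (fhom (DbarF F) (Diter n f)) _ (ePn (DbarF F) n A)).
    rewrite eq_rect_Dseq. apply Dseq_ext; intro k.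
    rewrite (eq_rect_dom HY), (DbarF_n HY), (Diter_F HX HY HF). f_equal.
    unfold psiinv. rewrite (Pnmap_iota HY). apply iota_pi.
  - intros X HX. exists (fun A => eq_refl). intros A B f. reflexivity.
  - intros X HX. exists (fun A => eq_refl). intros A B f. simpl.
    apply Dseq_ext; intro n. rewrite (proof_irrelevance _ (ePn (epsbar X) n A) eq_refl). simpl.
    apply Diter_0.
  - intros X HX. exists (fun A => eq_refl). intros A B f. simpl.
    apply functional_extensionality_dep; intro n.
    rewrite (proof_irrelevance _ (ePn (deltabar X) n A) eq_refl). simpl.
    apply Diter_D_delta.
Qed.
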